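(* Let $S$ be a semigroup of skew type with generating set $X=\{x_1,\ldots,x_n\}$, and assume $S$ satisfies the cyclic condition (C). Then $S$ satisfies the full cyclic condition (FC): for any $x,y\in X$ there exist sequences $x=z_1,z_2,\ldots,z_k$ and $y=y_1,y_2,\ldots,y_p$ of elements of $X$ such that, in $S$, $$y_j z_i = z_{i+1}\, y_{j+1}\quad\text{for all } 1\le i\le k,\ 1\le j\le p,$$ where indices of the $z$'s are read modulo $k$ (so $z_{k+1}=z_1$) and indices of the $y$'s modulo $p$ (so $y_{p+1}=y_1$).
   Context: A semigroup of skew type is a monoid $S$ with a monoid presentation $S=\langle x_1,\ldots,x_n \mid x_ix_j=x_kx_l\rangle$ consisting of $\binom{n}{2}$ relations, each of the form $x_ix_j=x_kx_l$ with $i\neq j$, $k\neq l$, such that every word $x_px_q$ with $p\neq q$ appears (as one side) in exactly one of the relations. We write $X=\{x_1,\ldots,x_n\}$ and use the same symbols for the generators in $S$. $S$ satisfies the cyclic condition (C) if for every pair $x,y\in X$ there exist elements $x=z_1,z_2,\ldots,z_k$ and $y'$ in $X$ such that in $S$: $yz_1=z_2y'$, $yz_2=z_3y'$, $\ldots$, $yz_{k-1}=z_ky'$, $yz_k=xy'$. *)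

(* Defs.v *)
From mathcomp Require Import all_boot.
Set Implicit Arguments. Unset Strict Implicit. Unset Printing Implicit Defensive.

(* A relation x_i x_j = x_k x_l of a presentation on generators 'I_n is
   stored as the pair ((i, j), (k, l)). *)
Definition rel2 (n : nat) := (('I_n * 'I_n) * ('I_n * 'I_n))%type.

Definition skew_type (n : nat) (rels : seq (rel2 n)) : Prop :=
  [/\ size rels = 'C(n, 2),
      (forall r, r \in rels -> r.1.1 != r.1.2 /\ r.2.1 != r.2.2) &
      (forall p q : 'I_n, p != q ->
         count (fun r : rel2 n => (r.1 == (p, q)) || (r.2 == (p, q))) rels = 1)].

(* The monoid congruence on the free monoid seq 'I_n generated by rels;
   equality in S = <X | rels> of the elements represented by words u, v. *)
Inductive eqS (n : nat) (rels : seq (rel2 n)) : seq 'I_n -> seq 'I_n -> Prop :=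
| eqS_rel : forall (r : rel2 n) (u v : seq 'I_n), r \in rels ->
    eqS rels (u ++ [:: r.1.1; r.1.2] ++ v) (u ++ [:: r.2.1; r.2.2] ++ v)
| eqS_refl : forall u, eqS rels u u
| eqS_sym : forall u v, eqS rels u v -> eqS rels v u
| eqS_trans : forall u v w, eqS rels u v -> eqS rels v w -> eqS rels u w.

(* Cyclic condition (C); the sequence z_1..z_k is z 0 .. z (k-1),
   with z_{k+1} read as z_1 = x (index modulo k). *)
Definition cyclic_condition (n : nat) (rels : seq (rel2 n)) : Prop :=
  forall x y : 'I_n, exists (k : nat) (z : nat -> 'I_n) (y' : 'I_n),
    [/\ 0 < k, z 0 = x &
        forall i, i < k -> eqS rels [:: y; z i] [:: z (i.+1 %% k); y']].

Definition full_cyclic_condition (n : nat) (rels : seq (rel2 n)) : Prop :=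
  forall x y : 'I_n, exists (k p : nat) (z w : nat -> 'I_n),
    [/\ 0 < k, 0 < p, z 0 = x, w 0 = y &
        forall i j, i < k -> j < p ->
          eqS rels [:: w j; z i] [:: z (i.+1 %% k); w (j.+1 %% p)]].

(* Main.v *)
Require Import Defs.
From mathcomp Require Import all_boot.

Set Implicit Arguments. Unset Strict Implicit. Unset Printing Implicit Defensive.

Section Skew.
Variables (n : nat) (rels : seq (rel2 n)).

Definition side1 (r : rel2 n) : seq 'I_n := [:: r.1.1; r.1.2].
Definition side2 (r : rel2 n) : seq 'I_n := [:: r.2.1; r.2.2].

Definition RelBy r (u v : seq 'I_n) :=
  ((u == side1 r) && (v == side2 r)) || ((u == side2 r) && (v == side1 r)).

Definition relb u v := has (fun r => RelBy r u v) rels.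

Lemma eqS_size u v : eqS rels u v -> size u = size v.
Proof.
elim=> [r u0 v0 _|//|u0 v0 _ ->|u0 v0 w0 _ -> _ ->] //.
by rewrite !size_cat.
Qed.

Lemma relb_sym u v : relb u v = relb v u.
Proof.
apply/eq_has => r; rewrite /RelBy.
by case: (u == side1 r); case: (v == side2 r); case: (u == side2 r); case: (v == side1 r).
Qed.

Lemma relb_eqS u v : relb u v -> eqS rels u v.
Proof.
case/hasP=> r rin /orP[/andP[/eqP -> /eqP ->]|/andP[/eqP -> /eqP ->]].
  exact: (@eqS_rel _ _ r [::] [::]).
apply: eqS_sym; exact: (@eqS_rel _ _ r [::] [::]).
Qed.

Hypothesis sk : skew_type rels.

Lemma side_neq r p q : r \in rels -> (side1 r = [:: p; q] \/ side2 r = [:: p; q]) -> p != q.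
Proof.
case: sk => _ H _ rin; case: (H r rin) => h1 h2.
by case=> [[<- <-]|[<- <-]].
Qed.

Lemma RelBy_side r u v : RelBy r u v -> (side1 r = u \/ side2 r = u).
Proof. by case/orP=> /andP[/eqP -> _]; [left|right]. Qed.

Lemma rel_uniq r r' p q : r \in rels -> r' \in rels ->
  (side1 r = [:: p; q] \/ side2 r = [:: p; q]) ->
  (side1 r' = [:: p; q] \/ side2 r' = [:: p; q]) -> r = r'.
Proof.
move=> rin rin' h h'.
have pq := side_neq rin h.
case: sk => _ _ /(_ p q pq) cnt.
pose P := fun r0 : rel2 n => (r0.1 == (p, q)) || (r0.2 == (p, q)).
have PP r0 : (side1 r0 = [:: p; q] \/ side2 r0 = [:: p; q]) -> P r0.
  case: r0 => [[a b] [c d]]; rewrite /side1 /side2 /P /=.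
  by case=> [[-> ->]|[-> ->]]; rewrite eqxx ?orbT.
have : size (filter P rels) = 1 by rewrite size_filter.
case E: (filter P rels) => [|t [|? ?]] //= _.
have : r \in filter P rels by rewrite mem_filter PP.
have : r' \in filter P rels by rewrite mem_filter PP.
by rewrite E !inE => /eqP -> /eqP ->.
Qed.

Lemma relb_fun u v w : relb u v -> relb u w -> v = w.
Proof.
case/hasP=> r rin H; case/hasP=> r' rin' H'.
have sz : exists p q, u = [:: p; q].
  by case/RelBy_side: H => <-; eexists; eexists.
case: sz => p [q eu].
have er : r = r'.
  by apply: (@rel_uniq r r' p q rin rin'); rewrite -eu; [exact: RelBy_side H| exact: RelBy_side H'].
move: H H'; rewrite -er /RelBy.
case/orP=> /andP[/eqP E1 /eqP ->]; case/orP=> /andP[/eqP E2 /eqP ->] //.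
  by rewrite -E1 E2.
by rewrite -E1 E2.
Qed.

Lemma eqS_char u v : eqS rels u v -> size u = 2 -> u = v \/ relb u v.
Proof.
elim=> [r u0 v0 rin|u0|u0 v0 H IH|u0 v0 w0 H1 IH1 H2 IH2] sz.
- right; case: u0 sz => [|a l]; case: v0 => [|b m] //=; rewrite ?size_cat /= => sz;
    try (exfalso; move: sz; rewrite ?addnS //; fail).
  by apply/hasP; exists r => //; rewrite /RelBy !eqxx.
- by left.
- have su : size u0 = 2 by rewrite (eqS_size H).
  case: (IH su) => [->|]; first by left.
  by rewrite relb_sym; right.
- have sv : size v0 = 2 by rewrite -(eqS_size H1).
  case: (IH1 sz) => [->|r1]; first exact: IH2.
  case: (IH2 sv) => [<-|r2]; first by right.
  left; apply: (@relb_fun v0); by [rewrite relb_sym|].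
Qed.

Definition E (a b c d : 'I_n) := eqS rels [:: a; b] [:: c; d].
Definition Nb (a b c d : 'I_n) := relb [:: a; b] [:: c; d] && ([:: a; b] != [:: c; d]).

Lemma E_char a b c d : E a b c d -> [:: a; b] = [:: c; d] \/ Nb a b c d.
Proof.
move=> H; case: (eqS_char H erefl) => [->|r]; first by left.
case: (eqVneq [:: a; b] [:: c; d]) => [->|ne]; first by left.
by right; rewrite /Nb r ne.
Qed.

Lemma Nb_E a b c d : Nb a b c d -> E a b c d.
Proof. by case/andP=> /relb_eqS. Qed.

Lemma Nb_sym a b c d : Nb a b c d -> Nb c d a b.
Proof. by case/andP; rewrite /Nb relb_sym eq_sym => -> ->. Qed.

Lemma Nb_fun a b c d c' d' : Nb a b c d -> Nb a b c' d' -> c = c' /\ d = d'.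
Proof.
case/andP=> H1 _; case/andP=> H2 _.
by case: (relb_fun H1 H2) => -> ->.
Qed.

Lemma Nb_neq1 a b c d : Nb a b c d -> a != b.
Proof.
case/andP=> /hasP[r rin H] _.
apply: (@side_neq r) => //; case: (RelBy_side H) => ->; by [left|right].
Qed.

Lemma Nb_neq a b c d : Nb a b c d -> a != b /\ c != d.
Proof. by move=> H; split; [exact: Nb_neq1 H|exact: Nb_neq1 (Nb_sym H)]. Qed.

Hypothesis hC : cyclic_condition rels.

Lemma NT x y k (z : nat -> 'I_n) y' : x != y -> z 0 = x ->
  (forall i, i < k -> E y (z i) (z (i.+1 %% k)) y') ->
  forall i, i < k -> Nb y (z i) (z (i.+1 %% k)) y'.
Proof.
move=> xy z0 H.
have zneq : forall i, i < k -> z i != y.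
  elim=> [|i IH] ik; first by rewrite z0.
  apply/eqP => zi.
  have ik' : i < k by apply: ltnW.
  have ey' : y' = y.
    have := H _ ik; rewrite zi => /E_char [[_ ->]//|/Nb_neq [/eqP]] //.
  have := H i ik'; rewrite modn_small // zi ey'.
  case/E_char => [[e]|/Nb_neq [_ /eqP]] //.
  by move: (IH ik'); rewrite e eqxx.
move=> i ik; have kp : 0 < k by apply: leq_ltn_trans ik.
case: (E_char (H i ik)) => // [[e1 _]].
by move: (zneq _ (ltn_pmod i.+1 kp)); rewrite -e1 eqxx.
Qed.

Lemma K y z a y' : Nb y z a y' -> exists y'', Nb y' z a y''.
Proof.
move=> H; have H' := Nb_sym H.
case: (Nb_neq H') => ay' _.
case: (hC y' a) => k [u [c [kp u0 Hu]]].
have Nu := NT (x:=y') (y:=a) (k:=k) (z:=u) (y':=c) (ltac:(by rewrite eq_sym) : y' != a) u0 Hu.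
have := Nu 0 kp; rewrite u0 => N0.
case: (Nb_fun H' N0) => _ cz.
have kk : k.-1 < k by rewrite prednK.
have := Nu k.-1 kk; rewrite prednK // modnn u0 -cz => Nk.
by exists (u k.-1); apply: Nb_sym.
Qed.

Definition tau x b := if [pick d | [exists c, Nb b x c d]] is Some d then d else b.

Lemma tau_spec x b c d : Nb b x c d -> tau x b = d.
Proof.
move=> H; rewrite /tau; case: pickP => [d' /existsP [c' H']|H0].
  by case: (Nb_fun H H').
by move: (H0 d) => /existsP; case; exists c.
Qed.

Lemma tau_none x : tau x x = x.
Proof.
rewrite /tau; case: pickP => [d' /existsP [c' H']|//].
by case: (Nb_neq H') => /eqP.
Qed.

Lemma ex_rel x b : b != x -> exists c d, Nb b x c d.
Proof.
move=> bx; case: (hC x b) => k [z [b' [kp z0 Hz]]].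
have := NT (ltac:(by rewrite eq_sym) : x != b) z0 Hz kp; rewrite z0 => H.
by exists (z (1 %% k)), b'.
Qed.

Lemma tau_inj x : injective (tau x).
Proof.
have gen : forall a b, a != x -> tau x a = tau x b -> a = b.
  move=> a b ax; case: (ex_rel ax) => c [d Nad]; rewrite (tau_spec Nad).
  case: (eqVneq b x) => [->|bx].
    rewrite tau_none => dx; subst d.
    by case: (K Nad) => e /Nb_neq [/eqP].
  case: (ex_rel bx) => c' [d' Nbd]; rewrite (tau_spec Nbd) => dd; subst d'.
  case: (K Nad) => e1 N1; case: (K Nbd) => e2 N2.
  case: (Nb_fun N1 N2) => cc _; subst c'.
  by case: (Nb_fun (Nb_sym Nad) (Nb_sym Nbd)).
move=> a b ab; case: (eqVneq a x) => [ax|ax]; last exact: gen.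
case: (eqVneq b x) => [bx|bx]; first by rewrite ax bx.
by symmetry; apply: gen.
Qed.

End Skew.

Theorem proposition2p1 (n : nat) (rels : seq (rel2 n)) :
  skew_type rels -> cyclic_condition rels -> full_cyclic_condition rels.
Proof.
move=> sk hC x y; case: (eqVneq x y) => [<-|xy].
  by exists 1, 1, (fun _ => x), (fun _ => x); split => // i j _ _; apply: eqS_refl.
case: (hC x y) => k [z [y' [kp z0 Hz]]].
have Nz := NT sk xy z0 Hz.
pose f := tau rels x.
have Inv : forall j i, i < k ->
    Nb rels (iter j f y) (z i) (z (i.+1 %% k)) (f (iter j f y)).
  elim=> [|j IH] i ik /=.
    have -> : f y = y'.
      by have := Nz 0 kp; rewrite z0 => /(tau_spec sk).
    exact: Nz.
  set c := f (iter j f y).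
  have Kc : forall i, i < k -> exists d, Nb rels c (z i) (z (i.+1 %% k)) d.
    by move=> i0 ik0; apply: (K sk hC (IH i0 ik0)).
  case: (Kc 0 kp) => d0; rewrite z0 => N0.
  have cx : c != x by case: (Nb_neq sk N0).
  case: (hC x c) => k' [u [c'' [kp' u0 Hu]]].
  have Nu := NT sk (ltac:(by rewrite eq_sym) : x != c) u0 Hu.
  have orb : forall i, i < k -> exists2 j, j < k' & z i = u j.
    elim=> [|i' IH'] ik'; first by exists 0 => //; rewrite z0 u0.
    case: (IH' (ltnW ik')) => j0 jk e.
    exists (j0.+1 %% k'); first exact: ltn_pmod.
    case: (Kc i' (ltnW ik')) => d Nd.
    have := Nu j0 jk; rewrite -e => Nj.
    by case: (Nb_fun sk Nd Nj); rewrite modn_small.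
  have fc : f c = c''.
    by have := Nu 0 kp'; rewrite u0 => /(tau_spec sk).
  rewrite fc; case: (orb i ik) => j0 jk e.
  case: (Kc i ik) => d Nd.
  have := Nu j0 jk; rewrite -e => Nj.
  by case: (Nb_fun sk Nd Nj) => ->.
have finj : injective f := tau_inj sk hC (x:=x).
exists k, (order f y), z, (fun j => iter j f y); split => //.
move=> i j ik jp.
have -> : iter (j.+1 %% order f y) f y = iter j.+1 f y.
  case: (ltngtP j.+1 (order f y)) => h; first by rewrite modn_small.
    by move: h; rewrite ltnS leqNgt jp.
  by rewrite h modnn /= iter_order.
by apply: Nb_E; apply: Inv.
Qed.
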